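(* Let $G^0,G^1,G^2$ be finite-dimensional complex vector spaces with $\dim G^1\ge1$. For a subspace $E\subset\mathrm{Hom}(G^0,G^1)$, define $$\phi_E:E\times\mathrm{Hom}(G^1,G^2)\to\mathrm{Hom}(G^0,G^2),\qquad(\alpha,\beta)\mapsto\beta\circ\alpha.$$ Let $p=\left\lfloor\frac{\dim G^1-1}{\dim G^0}\right\rfloor+1$. If $\dim G^0>1$, then for every integer $k$ with $3p\le k\le\dim\mathrm{Hom}(G^0,G^1)$ and every $E$ in a nonempty Zariski open subset of $G(k,\mathrm{Hom}(G^0,G^1))$, we have $\mathrm{Symm}(\phi_E)=\{0\}$.
   Context: For a bilinear map $B:E\times F\to G$, define $$\mathrm{Symm}(B)=\{q\in\mathrm{Hom}(E,F): B(\alpha,q(\alpha'))=B(\alpha',q(\alpha))\ \forall\alpha,\alpha'\in E\}.$$ Thus $\mathrm{Symm}(\phi_E)$ is the set of $q\in\mathrm{Hom}(E,\mathrm{Hom}(G^1,G^2))$ with $q(\alpha')\circ\alpha=q(\alpha)\circ\alpha'$ for all $\alpha,\alpha'\in E$. *)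

(* Defs.v *)
(* Complex numbers are modelled as R[i] for an arbitrary
   R : realType (every realType is a complete archimedean ordered field,
   i.e. isomorphic to the reals, so R[i] is the field of complex numbers). *)
From HB Require Import structures.
From mathcomp Require Import all_boot all_order all_algebra.
From mathcomp Require Import reals complex mpoly.

Set Implicit Arguments.
Unset Strict Implicit.
Unset Printing Implicit Defensive.

Import GRing.Theory.
Local Open Scope ring_scope.

Definition Symm (K : fieldType) (E F : vectType K) (G : Type)
  (B : E -> F -> G) : 'Hom(E, F) -> Prop :=
  fun q => forall a a' : E, B a (q a') = B a' (q a).

(* Convention: G^0 = K^n0, G^1 = K^n1, G^2 = K^n2 (column vectors), so that
   Hom(G^i, G^j) = 'M_(nj, ni) and composition beta o alpha = beta *m alpha. *)
Definition phi (K : fieldType) (n0 n1 n2 : nat) (E : {vspace 'M[K]_(n1, n0)})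
  : subvs_of E -> 'M[K]_(n2, n1) -> 'M[K]_(n2, n0) :=
  fun alpha beta => beta *m vsval alpha.

Definition rowspan_Hom (K : fieldType) (k n0 n1 : nat)
  (M : 'M[K]_(k, n1 * n0)) : {vspace 'M[K]_(n1, n0)} :=
  <<[seq vec_mx (row i M) | i <- enum 'I_k]>>%VS.

(* "Every E in some nonempty Zariski open subset of the Grassmannian
   G(k, Hom(G^0,G^1)) satisfies Pr".  Via the quotient map from the open set
   of full-rank k x N matrices (N = n1*n0) onto G(k, N) (an open, surjective
   morphism), this is expressed as: there is a nonzero polynomial P in the
   k*N matrix entries such that every k x N matrix M with P(M) <> 0 has full
   rank k and its row space E satisfies Pr. *)
Definition generic_in_Grass (K : fieldType) (k n0 n1 : nat)
  (Pr : {vspace 'M[K]_(n1, n0)} -> Prop) : Prop :=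
  exists P : {mpoly K[k * (n1 * n0)]},
    P != 0 /\
    forall M : 'M[K]_(k, n1 * n0),
      P.@[fun i => mxvec M 0 i] != 0 ->
      (\dim (rowspan_Hom M) = k)%N /\ Pr (rowspan_Hom M).

(* Main.v *)
Require Import Defs.
From HB Require Import structures.
From mathcomp Require Import all_boot all_order all_algebra.
From mathcomp Require Import reals complex mpoly.
From mathcomp Require Import ring lra zify.

Set Implicit Arguments.
Unset Strict Implicit.
Unset Printing Implicit Defensive.
Import GRing.Theory Num.Theory.
Local Open Scope ring_scope.

Section Gen.
Variable F : comNzRingType.
Variables k n0 n1 : nat.

Definition Amat (M : 'M[F]_(k, n1 * n0)) (i : 'I_k) : 'M[F]_(n1, n0) :=
  vec_mx (row i M).

Definition Lmap (M : 'M[F]_(k, n1 * n0)) (V : 'M[F]_(k, n1)) : 'M[F]_(k, k * n0) :=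
  \matrix_(i < k) mxvec (\matrix_(j < k, c < n0)
     \sum_(b < n1) (V j b * Amat M i b c - V i b * Amat M j b c)).

Lemma LmapE M V i j c : Lmap M V i (mxvec_index j c) =
  \sum_(b < n1) (V j b * Amat M i b c - V i b * Amat M j b c).
Proof. by rewrite mxE mxvecE mxE. Qed.

Definition PhiF M (v : 'rV[F]_(k * n1)) : 'rV[F]_(k * (k * n0)) := mxvec (Lmap M (vec_mx v)).

Lemma Lmap_lin M : linear (PhiF M).
Proof.
move=> a u v; rewrite /PhiF; apply/rowP => x; case/mxvec_indexP: x => i y.
case/mxvec_indexP: y => j c.
rewrite !mxE !mxvecE !LmapE mulr_sumr -big_split /=.
apply: eq_bigr => b _; rewrite !mxE; ring.
Qed.

HB.instance Definition _ M := GRing.isLinear.Build F 'rV[F]_(k * n1) 'rV[F]_(k * (k * n0)) _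
  (PhiF M) (Lmap_lin M).

Definition Phi M := lin1_mx (PhiF M).

Lemma PhiE M v : v *m Phi M = PhiF M v.
Proof. exact: mul_rV_lin1. Qed.

End Gen.

Section Maps.
Variables (F F' : comNzRingType) (f : {rmorphism F -> F'}) (k n0 n1 : nat).
Lemma Lmap_map M V :
  map_mx f (@Lmap F k n0 n1 M V) = @Lmap F' k n0 n1 (map_mx f M) (map_mx f V).
Proof.
apply/matrixP => i x; case/mxvec_indexP: x => j c.
rewrite mxE !LmapE rmorph_sum; apply: eq_bigr => b _.
by rewrite /Amat -!map_row -!map_vec_mx !mxE rmorphB !rmorphM.
Qed.

Lemma Phi_map M :
  map_mx f (@Phi F k n0 n1 M) = @Phi F' k n0 n1 (map_mx f M).
Proof.
apply/matrixP => r x; rewrite /Phi !mxE /PhiF.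
rewrite [in RHS](_ : delta_mx 0 r = map_mx f (delta_mx 0 r)); last first.
  by apply/matrixP => a b; rewrite !mxE rmorph_nat.
by rewrite -map_vec_mx -Lmap_map -map_mxvec mxE.
Qed.

End Maps.

Lemma Lmap0P (F : comNzRingType) k n0 n1 (M : 'M[F]_(k, n1 * n0)) V :
  @Lmap F k n0 n1 M V = 0 <->
  forall i j, row j V *m Amat M i = row i V *m Amat M j.
Proof.
split.
  move=> H i j; apply/rowP => c; apply/eqP; rewrite -subr_eq0; apply/eqP.
  have := congr1 (fun X : 'M[F]_(k, k * n0) => X i (mxvec_index j c)) H.
  rewrite LmapE mxE => <-; rewrite !mxE -sumrB; apply: eq_bigr => b _.
  by rewrite !mxE.
move=> H; apply/matrixP => i x; case/mxvec_indexP: x => j c.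
rewrite LmapE mxE sumrB; apply/eqP; rewrite subr_eq0; apply/eqP.
have := congr1 (fun X : 'rV[F]_n0 => X 0 c) (H i j); rewrite !mxE => E.
transitivity (\sum_b row j V 0 b * Amat M i b c).
  by apply: eq_bigr => b _; rewrite !mxE.
rewrite E; apply: eq_bigr => b _; by rewrite !mxE.
Qed.

Lemma gram_det (R : realFieldType) m n (A : 'M[R]_(m, n)) :
  (forall v : 'rV[R]_m, v *m A = 0 -> v = 0) -> \det (A *m A^T) != 0.
Proof.
move=> inj; apply/negP => /det0P [v nz Hv].
have w0 : v *m A = 0.
  have : (v *m A) *m (v *m A)^T = 0 by rewrite trmx_mul mulmxA -(mulmxA v) Hv mul0mx.
  move/(congr1 (fun X : 'M[R]_1 => X 0 0)); rewrite !mxE => S.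
  apply/rowP => j; rewrite [RHS]mxE.
  have P0 : forall i : 'I_n, true -> 0 <= (v *m A) 0 i * (v *m A)^T i 0.
    by move=> i _; rewrite [(v *m A)^T _ _]mxE -expr2 sqr_ge0.
  have := psumr_eq0P P0 S.
  move=> /(_ j isT); rewrite [(v *m A)^T _ _]mxE => /eqP; rewrite mulf_eq0 orbb => /eqP.
  by [].
by move: nz; rewrite (inj _ w0) eqxx.
Qed.

Lemma det_gram_inj (K : fieldType) m n (A : 'M[K]_(m, n)) :
  \det (A *m A^T) != 0 -> forall v : 'rV[K]_m, v *m A = 0 -> v = 0.
Proof.
move=> H v Hv; apply/eqP; apply: contraNT H => nz.
by apply/det0P; exists v => //; rewrite mulmxA Hv mul0mx.
Qed.

Lemma Lmap_inj (F : fieldType) k n0 n1 (M : 'M[F]_(k, n1 * n0)) :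
  (forall v : 'rV[F]_(k * n1), v *m @Phi F k n0 n1 M = 0 -> v = 0) ->
  forall V, @Lmap F k n0 n1 M V = 0 -> V = 0.
Proof.
move=> H V L0; have := H (mxvec V); rewrite PhiE /PhiF mxvecK L0 linear0 => /(_ erefl).
by move/(congr1 vec_mx); rewrite mxvecK linear0.
Qed.

Section Final.
Variables (K : fieldType) (k n0 n1 n2 : nat) (M : 'M[K]_(k, n1 * n0)).
Hypothesis Mfree : forall c : 'rV[K]_k, c *m M = 0 -> c = 0.
Hypothesis Linj : forall V, @Lmap K k n0 n1 M V = 0 -> V = 0.

Let X := [seq vec_mx (row i M) | i <- enum 'I_k].

Lemma sizeX : size X = k.
Proof. by rewrite size_map size_enum_ord. Qed.

Lemma nthX (i : 'I_k) : X`_i = vec_mx (row i M).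
Proof. by rewrite (nth_map i) ?size_enum_ord // nth_ord_enum. Qed.

Lemma dim_rowspan : \dim (rowspan_Hom M) = k.
Proof.
rewrite /rowspan_Hom -/X -[RHS]sizeX; apply/eqP.
change (free (in_tuple X)); apply/freeP => kc Hs i.
pose c := \row_(j < k) kc (cast_ord (esym sizeX) j).
have cM : c *m M = 0.
  rewrite -[c *m M]vec_mxK -[0]vec_mxK; congr mxvec; rewrite linear0 -{}Hs.
  rewrite mulmx_sum_row linear_sum /=.
  rewrite [RHS](reindex (cast_ord (esym sizeX))) /=; last first.
    by exists (cast_ord sizeX) => j _; rewrite ?cast_ordK ?cast_ordKV.
  apply: eq_bigr => j _; rewrite linearZ /= mxE; congr (_ *: _).
  by rewrite -(nthX j).
have := congr1 (fun r : 'rV[K]_k => r 0 (cast_ord sizeX i)) (Mfree cM).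
by rewrite !mxE cast_ordK.
Qed.

Lemma symm_trivial (q : 'Hom(subvs_of (rowspan_Hom M), 'M[K]_(n2, n1))) :
  Symm (@phi K n0 n1 n2 (rowspan_Hom M)) q -> q = 0.
Proof.
move=> Hq; set E := rowspan_Hom M in q Hq *.
pose a j := vsproj E (vec_mx (row j M)).
have inE j : vec_mx (row j M) \in E.
  by apply: memv_span; apply: map_f; rewrite mem_enum.
have va j : vsval (a j) = vec_mx (row j M) by rewrite /a vsprojK.
have qa j : q (a j) = 0.
  apply/matrixP => b c; rewrite [RHS]mxE.
  pose V := \matrix_(j < k, c < n1) q (a j) b c.
  have rV l : row l V = row b (q (a l)) by apply/rowP => x; rewrite !mxE.
  have V0 : V = 0.
    apply: Linj; apply/Lmap0P => i l; rewrite !rV /Amat -!va -!row_mul.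
    by have := Hq (a i) (a l); rewrite /phi => ->.
  by have := congr1 (fun W : 'M[K]_(k, n1) => W j c) V0; rewrite !mxE.
apply/lfunP => x; rewrite zero_lfunE.
pose g := (q \o linfun (vsproj E))%VF.
pose z : 'Hom('M[K]_(n1, n0), 'M[K]_(n2, n1)) := 0.
have gX : {in X, g =1 z}.
  move=> u /mapP [j _ ->]; by rewrite zero_lfunE comp_lfunE lfunE /= qa.
have := (proj2 (span_lfunP X g z) gX) (vsval x) (subvsP x).
by rewrite zero_lfunE comp_lfunE lfunE /= vsvalK.
Qed.

End Final.
Section Constr.
Variables (R : numFieldType) (n0 : nat).
Hypothesis n0gt1 : (1 < n0)%N.

Definition Dm : 'M[R]_n0 := diag_mx (\row_(i < n0) (i : nat)%:R).
Definition Cm : 'M[R]_n0 := \matrix_(i, j) ((j : nat) == (i.+1 %% n0)%N)%:R.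

Lemma modS_val (i : 'I_n0) : (i.+1 %% n0 = if i.+1 == n0 then 0 else i.+1)%N.
Proof.
case: eqP => [->|ne]; first by rewrite modnn.
by rewrite modn_small //; have := ltn_ord i; lia.
Qed.

Lemma modS_inj (l i : 'I_n0) : ((l.+1 %% n0 == i.+1 %% n0)%N) = (l == i).
Proof.
have := ltn_ord l; have := ltn_ord i => hi hl.
apply/idP/idP => [/eqP|/eqP -> //]; move=> E; apply/eqP; apply: val_inj => /=.
move: E; rewrite !modS_val; case: ifP => /eqP h1; case: ifP => /eqP h2; lia.
Qed.

Lemma modS_neq (i : 'I_n0) : (i.+1 %% n0)%N != i.
Proof.
have := ltn_ord i => hi; rewrite modS_val; case: ifP => /eqP h; apply/eqP; lia.
Qed.

Lemma comm_inj (a : 'rV[R]_n0) : a *m (Cm *m Dm - Dm *m Cm) = 0 -> a = 0.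
Proof.
move=> H; apply/rowP => i; rewrite mxE.
have n0pos : (0 < n0)%N by lia.
pose j : 'I_n0 := Ordinal (ltn_pmod i.+1 n0pos).
have := congr1 (fun r : 'rV[R]_n0 => r 0 j) H; rewrite !mxE.
rewrite (bigD1 i) //= big1 ?addr0; last first.
  move=> l /negPf nli; rewrite /Dm mul_mx_diag mul_diag_mx !mxE /= eq_sym modS_inj nli.
  by rewrite mul0r mulr0 subrr mulr0.
rewrite /Dm mul_mx_diag mul_diag_mx !mxE /= eqxx mul1r mulr1.
move/eqP; rewrite mulf_eq0 => /orP [/eqP //|].
rewrite subr_eq0 eqr_nat => /eqP E; move: (modS_neq i); by rewrite E eqxx.
Qed.


Variables (n1 k : nat).
Hypothesis n1gt0 : (0 < n1)%N.
Let p := ((n1 - 1) %/ n0 + 1)%N.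
Hypothesis kge : (3 * p <= k)%N.

Definition Jm (t : nat) : 'M[R]_(n1, n0) := \matrix_(b, c) ((b : nat) == t * n0 + c)%N%:R.
Definition Xs (x : nat) : 'M[R]_n0 := if x == 0%N then 1%:M else if x == 1%N then Dm else Cm.
Definition A0 (i : 'I_k) : 'M[R]_(n1, n0) :=
  if (i < 3 * p)%N then Jm (i %/ 3) *m Xs (i %% 3) else 0.
Definition M0R : 'M[R]_(k, n1 * n0) := \matrix_(i < k) mxvec (A0 i).

Lemma AmatM0 i : Amat M0R i = A0 i.
Proof. by rewrite /Amat rowK mxvecK. Qed.

Lemma coverage (v : 'rV[R]_n1) : (forall t, (t < p)%N -> v *m Jm t = 0) -> v = 0.
Proof.
move=> H; apply/rowP => b; rewrite [RHS]mxE.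
have n0pos : (0 < n0)%N by lia.
pose c : 'I_n0 := Ordinal (ltn_pmod b n0pos).
have tp : (b %/ n0 < p)%N.
  have : (b %/ n0 <= (n1 - 1) %/ n0)%N by apply: leq_div2r; have := ltn_ord b; lia.
  rewrite /p; lia.
have := congr1 (fun r : 'rV[R]_n0 => r 0 c) (H _ tp); rewrite !mxE.
have Eb : (b %/ n0 * n0 + b %% n0 = b)%N by rewrite -divn_eq.
rewrite (bigD1 b) //= big1 ?addr0; last first.
  move=> b' nb; rewrite mxE /= Eb.
  have /negPf -> : (b' : nat) != b by []. 
  by rewrite mulr0.
by rewrite mxE /= Eb eqxx mulr1.
Qed.

Lemma A0E (i : 'I_k) t x : (t < p)%N -> (x < 3)%N -> val i = (3 * t + x)%N ->
  A0 i = Jm t *m Xs x.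
Proof.
move=> tp x3 ei; rewrite /A0 ei ifT; last by lia.
have -> : ((3 * t + x) %/ 3 = t)%N by rewrite mulnC divnMDl // divn_small // addn0.
by have -> : ((3 * t + x) %% 3 = x)%N by rewrite mulnC modnMDl modn_small.
Qed.

Lemma ordOf m : (m < k)%N -> {i : 'I_k | val i = m}.
Proof. by move=> h; exists (Ordinal h). Qed.

Lemma M0R_inj V : @Lmap R k n0 n1 M0R V = 0 -> V = 0.
Proof.
move/Lmap0P; rewrite /= => H0.
have H i j : row j V *m A0 i = row i V *m A0 j by rewrite -!AmatM0.
have key : forall t s y (j : 'I_k), (t < p)%N -> (s < p)%N -> (y < 3)%N ->
    val j = (3 * s + y)%N -> row j V *m Jm t = 0.
  move=> t s y j tp sp y3 ej.
  have [i0 ei0] := @ordOf (3 * t) ltac:(lia).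
  have [i1 ei1] := @ordOf (3 * t + 1) ltac:(lia).
  have [j0 ej0] := @ordOf (3 * s) ltac:(lia).
  have [j2 ej2] := @ordOf (3 * s + 2) ltac:(lia).
  have E (i j' : 'I_k) x y' : (x < 3)%N -> (y' < 3)%N -> val i = (3 * t + x)%N ->
      val j' = (3 * s + y')%N ->
      row j' V *m Jm t *m Xs x = row i V *m Jm s *m Xs y'.
    move=> x3 y'3 ei ej'; rewrite -!mulmxA -(A0E tp x3 ei) -(A0E sp y'3 ej').
    exact: H.
  have X0 : Xs 0 = 1%:M by [].
  have X1 : Xs 1 = Dm by [].
  have X2 : Xs 2 = Cm by [].
  have e00 := E i0 j0 0%N 0%N isT isT ltac:(lia) ltac:(lia).
  rewrite X0 !mulmx1 in e00.
  have ey := E i0 j 0%N y isT y3 ltac:(lia) ej.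
  rewrite X0 mulmx1 in ey.
  have e12 := E i1 j2 1%N 2%N isT isT ei1 ej2.
  rewrite X1 X2 in e12.
  have ex1 := E i1 j0 1%N 0%N isT isT ei1 ltac:(lia).
  have ex2 := E i0 j2 0%N 2%N isT isT ltac:(lia) ej2.
  rewrite X0 X1 mulmx1 in ex1; rewrite X0 X2 mulmx1 in ex2.
  have a0 : row j0 V *m Jm t = 0.
    apply: comm_inj; rewrite mulmxBr !mulmxA e00 -ex2 e12 -ex1 -e00.
    by rewrite subrr.
  by rewrite ey -e00 a0 !mul0mx.
have rowlt (j : 'I_k) : (j < 3 * p)%N -> row j V = 0.
  move=> jl; apply: coverage => t tp.
  apply: (key t (j %/ 3)%N (j %% 3)%N j tp).
  - by rewrite ltn_divLR // mulnC.
  - by rewrite ltn_mod.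
  - by rewrite [in RHS]mulnC -divn_eq.
have rowge (j : 'I_k) : (3 * p <= j)%N -> row j V = 0.
  move=> jg; apply: coverage => t tp.
  have [i0 ei0] := @ordOf (3 * t) ltac:(lia).
  have := H i0 j; rewrite (A0E (x := 0) tp isT) ?addn0 // mulmx1 => ->.
  by rewrite /A0 ifF ?mulmx0 //; apply/negbTE; rewrite -leqNgt.
apply/row_matrixP => j; rewrite row0; case: (ltnP j (3 * p)); [exact: rowlt | exact: rowge].
Qed.

End Constr.

Theorem mainTheorem4 (R : realType) (n0 n1 n2 : nat) :
  (1 <= n1)%N -> (1 < n0)%N ->
  let p := ((n1 - 1) %/ n0 + 1)%N in
  forall k : nat, (3 * p <= k)%N -> (k <= n1 * n0)%N ->
  @generic_in_Grass R[i] k n0 n1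
    (fun E => forall q : 'Hom(subvs_of E, 'M[R[i]]_(n2, n1)),
        Symm (@phi R[i] n0 n1 n2 E) q -> q = 0).
Proof.
move=> n1gt0 n0gt1 p k kge kle.
pose N := (k * (n1 * n0))%N.
pose Xm : 'M[{mpoly (R[i])[N]}]_(k, n1 * n0) := vec_mx (\row_(i < N) 'X_i).
pose P1 := \det (Xm *m Xm^T).
pose P2 := \det (@Phi _ k n0 n1 Xm *m (@Phi _ k n0 n1 Xm)^T).
have evX (M : 'M[R[i]]_(k, n1 * n0)) :
    map_mx (meval (fun i => mxvec M 0 i)) Xm = M.
  rewrite /Xm map_vec_mx -[RHS]mxvecK; congr vec_mx.
  by apply/rowP => i; rewrite !mxE mevalXU.
have ev1 (M : 'M[R[i]]_(k, n1 * n0)) :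
    P1.@[fun i => mxvec M 0 i] = \det (M *m M^T).
  by rewrite /P1 -det_map_mx map_mxM -map_trmx evX.
have ev2 (M : 'M[R[i]]_(k, n1 * n0)) :
    P2.@[fun i => mxvec M 0 i] = \det (@Phi _ k n0 n1 M *m (@Phi _ k n0 n1 M)^T).
  by rewrite /P2 -det_map_mx map_mxM -map_trmx Phi_map evX.
exists (P1 * P2); split.
  rewrite mulf_neq0 //.
    apply/eqP => h; have := ev1 (pid_mx k).
    rewrite h meval0 tr_pid_mx mul_pid_mx minnn (minn_idPr kle) pid_mx_1 det1.
    by move/eqP; rewrite eq_sym oner_eq0.
  apply/eqP => h; have := ev2 (map_mx (real_complex R) (M0R R n0 n1 k)).
  rewrite h meval0 -Phi_map map_trmx -map_mxM det_map_mx => /esym/eqP.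
  rewrite fmorph_eq0; apply/negP; apply: gram_det => v.
  rewrite PhiE /PhiF => /(congr1 vec_mx); rewrite mxvecK linear0.
  move/(M0R_inj n0gt1 n1gt0 kge) => /(congr1 mxvec); by rewrite vec_mxK linear0.
move=> M; rewrite mevalM mulf_eq0 negb_or => /andP [h1 h2].
rewrite ev1 in h1; rewrite ev2 in h2.
have Mfree := det_gram_inj h1.
have Linj := Lmap_inj (det_gram_inj h2).
split; first exact: dim_rowspan.
by move=> q; apply: symm_trivial.
Qed.
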